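(* Let $n\ge4$, let $C=\mathrm{circ}(1,0,\ldots,0,-1)$ of order $n-1$, let $X=(CC^T+I_{n-1})^{-1}(J_{n-1}-nI_{n-1})$ and $Y=-C^TX$. Then $Y=\mathrm{circ}(d_0,d_1,\ldots,d_{n-2})$ where \[d_0=\frac{2n}{\sqrt{5}}\left[\frac{(3+\sqrt{5})^{n-2}-2^{n-2}}{2^{n-1}-(3+\sqrt{5})^{n-1}} -\frac{(3-\sqrt{5})^{n-2}-2^{n-2}}{2^{n-1}-(3-\sqrt{5})^{n-1}}\right]\] and for $j=1,2,\ldots,n-2$, \[d_j=-\frac{n2^{n-j}}{5+\sqrt{5}}\left[\frac{(3+\sqrt{5})^{j}}{2^{n-1}-(3+\sqrt{5})^{n-1}} +\frac{2(3-\sqrt{5})^{j-1}}{2^{n-1}-(3-\sqrt{5})^{n-1}}\right].\]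
   Context: For $c_0,\dots,c_{k-1}$, $\mathrm{circ}(c_0,\ldots,c_{k-1})$ denotes the $k\times k$ circulant matrix whose $(i,j)$-entry is $c_{(j-i)\bmod k}$. $J_{n-1}$ is the $(n-1)\times(n-1)$ all-ones matrix and $I_{n-1}$ the identity. Note $CC^T+I_{n-1}=\mathrm{circ}(3,-1,0,\ldots,0,-1)$ is invertible. ($X,Y$ are blocks of the Moore–Penrose inverse of the oriented incidence matrix of the wheel graph $W_n$.) *)

(* Defs.v *)
From HB Require Import structures.
From mathcomp Require Import all_boot all_order all_algebra.
Set Implicit Arguments. Unset Strict Implicit. Unset Printing Implicit Defensive.
Import Order.TTheory GRing.Theory Num.Theory.
Local Open Scope ring_scope.

Definition circ (R : nmodType) (k : nat) (c : nat -> R) : 'M[R]_k :=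
  \matrix_(i < k, j < k) c (((j + k) - i) %% k)%N.

Definition circC_coef (R : nzRingType) (k : nat) (j : nat) : R :=
  if j == 0%N then 1 else if j == k.-1 then -1 else 0.

(* Main.v *)
Require Import Defs.
From HB Require Import structures.
From mathcomp Require Import all_boot all_order all_algebra.
From mathcomp Require Import all_fingroup ring lra zify.
Import Order.TTheory GRing.Theory Num.Theory.
Local Open Scope ring_scope.


Notation gA p nn x := (- nn / ((1 + x) * (1 - x ^+ p.+3))).
Notation gB p nn x := (- nn / ((1 + x) * (1 - (x ^+ p.+3)^-1))).
Notation gD0 p nn x := (nn / (x - x^-1) * ((x ^+ p.+2 - 1) / (1 - x ^+ p.+3)
     - ((x ^+ p.+2)^-1 - 1) / (1 - (x ^+ p.+3)^-1))).
Notation gg p nn x i := (gA p nn x * x ^+ i.+1 + gB p nn x * (x ^+ i)^-1).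

Lemma gx0 (R : rcfType) (x : R) : 1 < x -> x != 0. Proof. move=> h; apply: lt0r_neq0; lra. Qed.
Lemma g1x (R : rcfType) (x : R) : 1 < x -> 1 + x != 0. Proof. move=> h; apply: lt0r_neq0; lra. Qed.
Lemma gxk (R : rcfType) (x : R) i : 1 < x -> 1 - x ^+ i.+1 != 0.
Proof. move=> hx1; rewrite subr_eq0 eq_sym; apply/negP => /eqP h. have := exprn_egt1 i.+1 hx1. by rewrite h ltxx. Qed.

Ltac side := rewrite -!exprS;
  repeat (apply/andP; split);
  first [ (apply: lt0r_neq0; nra) | (apply: ltr0_neq0; nra) ].

Lemma case0 (R : rcfType) p (nn x : R) : x ^+ 2 = 3 * x - 1 -> 1 < x ->
  3 * gD0 p nn x - gg p nn x 0 - gg p nn x p.+1 = nn.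
Proof. move=> hx hx1. have hk := exprn_egt1 p.+3 hx1. have hp : 0 < x ^+ p by rewrite exprn_gt0 //; lra. rewrite /= in hk. rewrite expr0 invr1 !exprS. field: hx; side. Qed.
Lemma case1 (R : rcfType) p (nn x : R) : x ^+ 2 = 3 * x - 1 -> 1 < x ->
  3 * gg p nn x 0 - gg p nn x 1 - gD0 p nn x = - nn.
Proof. move=> hx hx1. have hk := exprn_egt1 p.+3 hx1. have hp : 0 < x ^+ p by rewrite exprn_gt0 //; lra. rewrite /= in hk. rewrite expr0 invr1 !exprS. field: hx; side. Qed.
Lemma casek (R : rcfType) p (nn x : R) : x ^+ 2 = 3 * x - 1 -> 1 < x ->
  3 * gg p nn x p.+1 - gD0 p nn x - gg p nn x p = 0.
Proof. move=> hx hx1. have hk := exprn_egt1 p.+3 hx1. have hp : 0 < x ^+ p by rewrite exprn_gt0 //; lra. rewrite /= in hk. rewrite !exprS. field: hx; side. Qed.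
Lemma caseg (R : rcfType) p (nn x : R) r : x ^+ 2 = 3 * x - 1 -> 1 < x ->
  3 * gg p nn x r.+1 - gg p nn x r.+2 - gg p nn x r = 0.
Proof. move=> hx hx1. have hr : 0 < x ^+ r by rewrite exprn_gt0 //; lra. have hk := exprn_egt1 p.+3 hx1. have hp : 0 < x ^+ p by rewrite exprn_gt0 //; lra. rewrite /= in hk. rewrite !exprS. field: hx; side. Qed.
Definition dfun (R : rcfType) (n : nat) : nat -> R :=
  let s := Num.sqrt (5 : R) in
  fun j =>
    if j == 0%N then
      (2 * n%:R) / s *
        (((3 + s) ^+ (n - 2) - 2 ^+ (n - 2)) / (2 ^+ (n - 1) - (3 + s) ^+ (n - 1))
         - ((3 - s) ^+ (n - 2) - 2 ^+ (n - 2)) / (2 ^+ (n - 1) - (3 - s) ^+ (n - 1)))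
    else
      - (n%:R * 2 ^+ (n - j)) / (5 + s) *
        ((3 + s) ^+ j / (2 ^+ (n - 1) - (3 + s) ^+ (n - 1))
         + 2 * (3 - s) ^+ j.-1 / (2 ^+ (n - 1) - (3 - s) ^+ (n - 1))).

Section Scalar.
Variables (R : rcfType) (p : nat).
Local Notation s := (Num.sqrt (5:R)).
Local Notation x := ((3 + s) / 2 : R).
Local Notation y := ((3 - s) / 2 : R).

Lemma hs : s ^+ 2 = 5.
Proof. by rewrite sqr_sqrtr // ler0n. Qed.
Lemma s_gt2 : 2 < s.
Proof. have h0 : 0 <= s by rewrite sqrtr_ge0. have := hs. nra. Qed.
Lemma x_gt2 : 2 < x.
Proof. have := s_gt2; lra. Qed.
Lemma hxy : x * y = 1.
Proof. have := hs. move=> h. by field: h. Qed.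
Lemma hx2 : x ^+ 2 = 3 * x - 1.
Proof. have := hs. move=> h. by field: h. Qed.
Lemma hyx : y = x^-1.
Proof. have h : x != 0 by have := x_gt2; lra.
apply: (mulfI h); by rewrite hxy mulfV. Qed.
End Scalar.
Ltac neq0 := first [ done | (apply: mulf_neq0; neq0) | (apply: expf_neq0; neq0)
  | (apply: invr_neq0; neq0) | (apply: lt0r_neq0; lra) | (apply: ltr0_neq0; lra) ].

Section Scalar2.
Variables (R : rcfType) (p : nat).
Local Notation s := (Num.sqrt (5:R)).
Local Notation x := ((3 + s) / 2 : R).
Local Notation y := ((3 - s) / 2 : R).
Local Notation nn := ((p.+4)%:R : R).
Local Notation A := (- nn / ((1 + x) * (1 - x ^+ p.+3))).
Local Notation B := (- nn / ((1 + x) * (1 - y ^+ p.+3))).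

Lemma e1 : 3 + s = 2 * x. Proof. by field. Qed.
Lemma e2 : 3 - s = 2 * y. Proof. by field. Qed.
Lemma e3 : 5 + s = 2 * (1 + x). Proof. by field. Qed.
Lemma e4 : s = x - y. Proof. by field. Qed.

Lemma e2' : 3 - s = 2 * ((3 + s) / 2)^-1.
Proof. rewrite -hyx. by field. Qed.

Lemma dval i : (i <= p.+2)%N -> dfun R p.+4 i.+1 = gg p nn x i.
Proof.
move=> hi. rewrite /dfun /=.
rewrite (exprB (x := 2 : R)) ?unitfE ?pnatr_eq0 //.
rewrite subn1 /= e2' !(exprMn, exprVn) !exprS.
have ht : 5 < 3 + s by have := s_gt2 R; lra.
have hk : 2 ^+ p.+3 < (3 + s) ^+ p.+3 by rewrite ltrXn2r //; lra.
field; rewrite -!exprS; repeat (apply/andP; split); try neq0.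
  by rewrite -mulrBr; neq0.
by lia.
Qed.
Lemma d0val : dfun R p.+4 0 = gD0 p nn x.
Proof.
rewrite /dfun /= !subSS !subn0 e2' !(exprMn, exprVn) !exprS.
have ht : 5 < 3 + s by have := s_gt2 R; lra.
have hk : 2 ^+ p.+3 < (3 + s) ^+ p.+3 by rewrite ltrXn2r //; lra.
have h5 := hs R.
field: h5; rewrite -!exprS; repeat (apply/andP; split); try neq0.
by rewrite -mulrBr; neq0.
Qed.
Lemma drec q : (q < p.+3)%N ->
  3 * dfun R p.+4 q - dfun R p.+4 (if q == p.+2 then 0 else q.+1)
    - dfun R p.+4 (if q == 0%N then p.+2 else q.-1)
  = nn * ((q == 0%N)%:R - (q == 1%N)%:R).
Proof.
move=> hq.
have hx := hx2 R. have hx1 : 1 < x by have := x_gt2 R; lra.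
case: q hq => [|[|q]] hq /=.
- rewrite d0val !dval //; try lia.
  rewrite (case0 _ _ _ _ hx hx1). by rewrite subr0 mulr1.
- rewrite d0val !dval //; try lia.
  rewrite (case1 _ _ _ _ hx hx1). by rewrite sub0r mulrN1.
- rewrite subrr mulr0.
  case: (eqVneq q p) => [->|hqp].
  + rewrite eqxx d0val !dval //; try lia. exact: (casek _ _ _ _ hx hx1).
  + have -> : (q.+2 == p.+2) = false by apply/negbTE; rewrite !eqSS.
    rewrite !dval //; try lia.
    exact: (caseg _ _ _ _ _ hx hx1).
Qed.
End Scalar2.
Lemma valB p (i j : 'I_p.+3) : val (j - i) = (((j + p.+3) - i) %% p.+3)%N.
Proof. rewrite /= modnDmr addnBA //. exact: ltnW. Qed.

Lemma valS1 p (t : 'I_p.+3) : val (t + 1) = if val t == p.+2 then 0%N else (val t).+1.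
Proof.
rewrite (add_Zp_1 (p := p.+3) t) /=.
case: eqP => [->|h]; first by rewrite modnn.
rewrite modn_small //. rewrite /Zp_trunc /=. have := ltn_ord t. lia.
Qed.

Lemma valN1 p (t : 'I_p.+3) : val (t - 1) = if val t == 0%N then p.+2 else (val t).-1.
Proof.
rewrite (sub_Zp_1 (p := p.+3) t) /=.
case: eqP => [->|h]; first by rewrite modn_small.
have := ltn_ord t => ht.
have -> : (t + p.+3).-1 = (t.-1 + p.+3)%N by lia.
rewrite modnDr modn_small //. lia.
Qed.

Lemma circE (R : nmodType) p (c : nat -> R) :
  circ p.+3 c = \matrix_(i, j) c (val (j - i : 'I_p.+3)).
Proof. apply/matrixP => i j; by rewrite !mxE valB. Qed.

Definition sh p : 'S_p.+3 :=
  perm (can_inj (g := fun i : 'I_p.+3 => i + 1) (fun i => subrK 1 i)).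

Lemma shE p i : sh p i = i - 1.
Proof. by rewrite permE. Qed.

Lemma shVE p i : ((sh p)^-1)%g i = i + 1.
Proof. apply: (perm_inj (s := sh p)). by rewrite permKV shE addrK. Qed.

Lemma valm1 p : val (- 1 : 'I_p.+3) = p.+2.
Proof. by rewrite -sub0r valN1. Qed.

Lemma Cperm (R : rcfType) p :
  circ p.+3 (circC_coef R p.+3) = 1%:M - perm_mx (sh p).
Proof.
apply/matrixP => i j; rewrite circE !mxE /circC_coef shE /=.
have e0 : (val (j - i) == 0%N) = (i == j).
  by rewrite -[0%N]/(val (0 : 'I_p.+3)) val_eqE subr_eq0 eq_sym.
have e1 : (val (j - i) == p.+2) = (i - 1 == j).
  have -> : (i - 1 == j) = (j - i == -1).
    rewrite [RHS]eq_sym -subr_eq0 -[RHS]subr_eq0; congr (_ == 0); ring.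
  by rewrite -val_eqE valm1.
rewrite e0 e1.
case: (eqVneq i j) => [->|hij].
  have -> : (j - 1 == j) = false.
    apply/negbTE; rewrite -subr_eq0 addrAC subrr add0r oppr_eq0. by [].
  by rewrite subr0.
by case: (i - 1 == j); rewrite /= ?mulr0n ?mulr1n ?sub0r ?subrr ?oppr0.
Qed.

Section Mx.
Variables (R : rcfType) (p : nat).
Local Notation C := (circ p.+3 (circC_coef R p.+3)).
Local Notation P := (perm_mx (sh p) : 'M[R]_p.+3).
Local Notation Q := (perm_mx ((sh p)^-1)%g : 'M[R]_p.+3).

Lemma PQ1 : P *m Q = 1%:M.
Proof. by rewrite -perm_mxM mulgV perm_mx1. Qed.
Lemma QP1 : Q *m P = 1%:M.
Proof. by rewrite -perm_mxM mulVg perm_mx1. Qed.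

Lemma CtE : C^T = 1%:M - Q.
Proof. by rewrite Cperm linearB /= trmx1 tr_perm_mx. Qed.

Lemma CCt : C *m C^T = C^T *m C.
Proof.
rewrite CtE Cperm !mulmxBl !mulmxBr !mul1mx !mulmx1 PQ1 QP1.
by rewrite !opprB addrC.
Qed.
Lemma ACt : (C *m C^T + 1%:M) *m C^T = C^T *m (C *m C^T + 1%:M).
Proof. by rewrite mulmxDl mulmxDr mul1mx mulmx1 {1}CCt -mulmxA. Qed.

Lemma CtJ : C^T *m (const_mx 1 : 'M[R]_p.+3) = 0.
Proof. by rewrite CtE mulmxBl mul1mx -row_permE row_perm_const subrr. Qed.

Lemma wwT n (w : 'rV[R]_n) : (w *m w^T) 0 0 = \sum_l w 0 l ^+ 2.
Proof. rewrite mxE; apply: eq_bigr => l _; by rewrite mxE expr2. Qed.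

Lemma Aunit : (C *m C^T + 1%:M) \in unitmx.
Proof.
rewrite -row_free_unit; apply: inj_row_free => v hv.
have h : (v *m C) *m (v *m C)^T + v *m v^T = 0.
  rewrite trmx_mul !mulmxA -[v *m C *m C^T](mulmxA v) -mulmxDl.
  by rewrite -[v *m (C *m C^T) + v]mulmx1 -{2}[v]mulmx1 -mulmxDr hv !mul0mx.
have h00 := congr1 (fun M : 'M[R]_1 => M 0 0) h.
rewrite /= mxE !wwT mxE in h00.
have ha : 0 <= \sum_l (v *m C) 0 l ^+ 2 by apply: sumr_ge0 => l _; exact: sqr_ge0.
have hb : 0 <= \sum_l v 0 l ^+ 2 by apply: sumr_ge0 => l _; exact: sqr_ge0.
have hb0 : \sum_l v 0 l ^+ 2 = 0 by lra.
apply/matrixP => i l; rewrite (ord1 i) mxE.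
have hz := psumr_eq0P (fun l _ => sqr_ge0 (v 0 l)) hb0.
by apply/eqP; rewrite -sqrf_eq0; apply/eqP; exact: hz l isT.
Qed.
Lemma AE : C *m C^T + 1%:M = 3%:M - P - Q.
Proof.
rewrite CtE Cperm mulmxBl mul1mx mulmxBr mulmx1 PQ1.
apply/matrixP => i j; rewrite !mxE. ring.
Qed.

Lemma AD (d : nat -> R) (nn : R) :
  (forall q, (q < p.+3)%N ->
     3 * d q - d (if q == p.+2 then 0%N else q.+1)
       - d (if q == 0%N then p.+2 else q.-1)
     = nn * ((q == 0%N)%:R - (q == 1%N)%:R)) ->
  (C *m C^T + 1%:M) *m circ p.+3 d = nn *: C^T.
Proof.
move=> hd.
rewrite AE !mulmxBl mul_scalar_mx -!row_permE CtE circE.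
apply/matrixP => i j; rewrite !mxE shE shVE.
have -> : j - (i - 1) = (j - i) + 1 by ring.
have -> : j - (i + 1) = (j - i) - 1 by ring.
have -> : (i == j) = (j - i == 0) by rewrite subr_eq0 eq_sym.
have -> : (i + 1 == j) = (j - i == 1).
  by rewrite [RHS]eq_sym -subr_eq0 -[RHS]subr_eq0; congr (_ == 0); ring.
move: (j - i) => t.
have v1 : val (1 : 'I_p.+3) = 1%N by rewrite /= modn_small.
rewrite valS1 valN1 -!val_eqE v1 /=.
exact: hd (ltn_ord t).
Qed.
End Mx.

Theorem mainTheorem9 (R : rcfType) (n : nat) (hn : (4 <= n)%N) :
  let C : 'M[R]_(n.-1) := circ n.-1 (circC_coef R n.-1) in
  let X : 'M[R]_(n.-1) :=
    invmx (C *m C^T + 1%:M) *m (const_mx 1 - (n%:R)%:M) in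
  let Y : 'M[R]_(n.-1) := - (C^T *m X) in
  let s := Num.sqrt (5 : R) in
  let d : nat -> R := fun j =>
    if j == 0%N then
      (2 * n%:R) / s *
        (((3 + s) ^+ (n - 2) - 2 ^+ (n - 2)) / (2 ^+ (n - 1) - (3 + s) ^+ (n - 1))
         - ((3 - s) ^+ (n - 2) - 2 ^+ (n - 2)) / (2 ^+ (n - 1) - (3 - s) ^+ (n - 1)))
    else
      - (n%:R * 2 ^+ (n - j)) / (5 + s) *
        ((3 + s) ^+ j / (2 ^+ (n - 1) - (3 + s) ^+ (n - 1))
         + 2 * (3 - s) ^+ j.-1 / (2 ^+ (n - 1) - (3 - s) ^+ (n - 1))) in
  Y = circ n.-1 d.
Proof.
case: n hn => [|[|[|[|p]]]] // _.
move=> C X Y s d.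
change (- ((circ p.+3 (circC_coef R p.+3))^T *m
   (invmx (circ p.+3 (circC_coef R p.+3) *m (circ p.+3 (circC_coef R p.+3))^T + 1%:M)
    *m (const_mx 1 - ((p.+4)%:R)%:M))) = circ p.+3 (dfun R p.+4)).
set Cm := circ p.+3 (circC_coef R p.+3).
have hU := Aunit R p.
have hAD := @AD R p (dfun R p.+4) (p.+4)%:R (@drec R p).
have hcomm : Cm^T *m invmx (Cm *m Cm^T + 1%:M) = invmx (Cm *m Cm^T + 1%:M) *m Cm^T.
  rewrite -{1}(mulKmx hU Cm^T) ACt mulmxA. exact: mulmxK.
rewrite mulmxA hcomm -mulmxA mulmxBr CtJ mul_mx_scalar sub0r mulmxN opprK.
by rewrite -hAD mulKmx.
Qed.
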